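(* Let $P\in\mathrm{Sym}(n,\mathbb{R})$ be invertible and $Q\in\mathrm{Mat}(n,\mathbb{R})$. For $\lambda\in\mathbb{R}$ let $B_\lambda=\begin{bmatrix}P^{-1}&-P^{-1}Q\\-Q^TP^{-1}&Q^TP^{-1}Q-\lambda P\end{bmatrix}$ and $J=\begin{bmatrix}0&-I_n\\ I_n&0\end{bmatrix}$. Then there exists $\widehat\lambda>0$ such that $JB_\lambda$ is hyperbolic for every $\lambda>\widehat\lambda$.
   Context: A real matrix is hyperbolic if it has no eigenvalue on the imaginary axis. *)

(* Defs.v *)
From HB Require Import structures.
From mathcomp Require Import all_boot all_order all_algebra.
From mathcomp Require Import complex.
From mathcomp Require Import reals.
Set Implicit Arguments. Unset Strict Implicit. Unset Printing Implicit Defensive.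
Import Order.TTheory GRing.Theory Num.Theory.
Local Open Scope ring_scope.

Definition hyperbolic (R : rcfType) (m : nat) (M : 'M[R]_m) : Prop :=
  forall z : R[i], eigenvalue (map_mx (real_complex R) M) z -> Re z != 0.

Definition Bmat (R : fieldType) (n : nat) (P Q : 'M[R]_n) (l : R)
  : 'M[R]_(n + n) :=
  block_mx (invmx P) (- (invmx P *m Q))
           (- (Q^T *m invmx P)) (Q^T *m invmx P *m Q - l *: P).

Definition Jmat (R : pzRingType) (n : nat) : 'M[R]_(n + n) :=
  block_mx 0 (- 1%:M) 1%:M 0.

(* Main.v *)
Require Import Defs.
From HB Require Import structures.
From mathcomp Require Import all_boot all_order all_algebra.
From mathcomp Require Import complex.
From mathcomp Require Import reals ring lra.
Import Order.TTheory GRing.Theory Num.Theory.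
Local Open Scope ring_scope.
Local Open Scope complex_scope.

Lemma key (F : fieldType) n (P Q : 'M[F]_n) l z (p q : 'rV[F]_n) :
  P \in unitmx ->
  row_mx p q *m (Jmat F n *m Bmat P Q l) = z *: row_mx p q ->
  q = z *: (p *m P) - p *m Q^T /\
  (l - z ^+ 2) *: (p *m P) = z *: (p *m (Q - Q^T)).
Proof.
move=> Pu.
rewrite /Jmat /Bmat mulmxA mul_row_block.
rewrite ?mulmx0 ?mul0mx ?mulmx1 ?mulmxN ?add0r ?addr0 ?mulmx1.
rewrite mul_row_block scale_row_mx => /eq_row_mx [E1 E2].
rewrite mulNmx mulmxN opprK mulmxA -mulmxDl in E1.
have Hr : q + p *m Q^T = z *: (p *m P).
  have := congr1 (mulmx^~ P) E1.
  by rewrite -mulmxA mulVmx // mulmx1 -scalemxAl.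
have Hq : q = z *: (p *m P) - p *m Q^T by rewrite -Hr addrK.
split=> //.
have E3 : - ((z *: p) *m Q) + l *: (p *m P) = z *: q.
  rewrite -E2 -E1 mulmxN mulNmx mulmxBr !mulmxA !mulmxDl !opprD opprK addrA -scalemxAr.
  by [].
rewrite Hq scalerBr scalerA -expr2 -scalemxAl in E3.
have E4 : z ^+ 2 *: (p *m P) = (- (z *: (p *m Q)) + l *: (p *m P)) + z *: (p *m Q^T).
  by rewrite E3 subrK.
rewrite mulmxBr scalerBr scalerBl E4 !opprD !opprK addrA subrKC.
by []. Qed.

Local Notation nc := (@ComplexField.Normc.normc _).

Lemma nc_real (R : rcfType) (r : R) : nc (r%:C) = `|r|.
Proof. by rewrite /ComplexField.Normc.normc /= expr0n /= addr0 sqrtr_sqr. Qed.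

Lemma nc_ge0 (R : rcfType) (x : R[i]) : 0 <= nc x.
Proof. by case: x => a b; rewrite /ComplexField.Normc.normc sqrtr_ge0. Qed.

Lemma nc_sum (R : rcfType) (I : finType) (G : I -> R[i]) :
  nc (\sum_i G i) <= \sum_i nc (G i).
Proof.
elim/big_rec2: _ => [|j a b _ Hab]; first by rewrite ComplexField.Normc.normc0.
by apply: (le_trans (le_normcD _ _)); rewrite lerD2l.
Qed.

Lemma final (R : realType) (K l t : R) :
  0 <= K -> 0 <= t -> K ^+ 2 + 1 < l -> l + t ^+ 2 <= t * K -> False.
Proof. move=> *; nra. Qed.

Theorem corollary2p5 (R : realType) (n : nat) (P Q : 'M[R]_n) :
  P^T = P -> P \in unitmx ->
  exists lhat : R, 0 < lhat /\
    forall l : R, lhat < l -> hyperbolic (Jmat R n *m Bmat P Q l).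
Proof.
move=> PT Pu.
set A := (Q - Q^T) *m invmx P.
set K : R := \sum_i \sum_j `|A i j|.
have K0 : 0 <= K by apply: sumr_ge0 => i _; apply: sumr_ge0 => j _.
exists (K ^+ 2 + 1); split; first by rewrite ltr_wpDl ?sqr_ge0.
move=> l Hl z /eigenvalueP [v Hv v0]; apply/eqP => Rez.
set f := real_complex R.
have Emap : map_mx f (Jmat R n *m Bmat P Q l) =
    Jmat _ n *m Bmat (map_mx f P) (map_mx f Q) (f l).
  rewrite map_mxM /Jmat /Bmat !map_block_mx !map_mxN map_mx0 map_mx1 map_mxB.
  by rewrite !map_mxM map_mxZ map_invmx map_trmx.
rewrite Emap -(hsubmxK v) in Hv.
have Pcu : map_mx f P \in unitmx by rewrite map_unitmx.
have [Hq Hk] := @key _ _ _ _ _ _ _ _ Pcu Hv.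
set p := lsubmx v in Hq Hk.
have [k0 Hk0] : exists k, p 0 k != 0.
  case: (pickP (fun k => p 0 k != 0)) => [k Hk'|H]; first by exists k.
  exfalso; move: v0; rewrite -(hsubmxK v) -/p.
  have p0 : p = 0.
    by apply/matrixP => i j; rewrite (ord1 i); move: (H j) => /= /negbFE/eqP ->; rewrite mxE.
  have q0 : rsubmx v = 0 by apply: etrans Hq _; rewrite p0 !mul0mx scaler0 subrr.
  by rewrite q0 p0 row_mx0 eqxx.
clearbody p.
move: Rez Hk Hq; clear Hv; case: z => a b a0 Hk Hq; rewrite -complexRe /= in a0; have /complexI a00 := a0; subst a.
have z2 : (0 +i* b) ^+ 2 = - (b ^+ 2)%:C.
  rewrite expr2; apply/eqP; by rewrite eq_complex /= !mul0r !mulr0 ?add0r ?oppr0 ?sub0r expr2 !eqxx.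
rewrite z2 opprK in Hk.
have HM : (map_mx f Q - (map_mx f Q)^T) *m invmx (map_mx f P) = map_mx f A.
  by rewrite /A map_mxM map_invmx map_mxB map_trmx.
have Hp := congr1 (mulmx^~ (invmx (map_mx f P))) Hk; simpl in Hp.
rewrite -!scalemxAl -!mulmxA mulmxV // mulmx1 HM in Hp.
case: (@arg_maxP _ _ _ k0 xpredT (fun j => nc (p 0 j)) isT) => k _ Hmax.
have := congr1 (fun M : 'rV[R[i]]_n => M 0 k) Hp; rewrite !mxE /f -rmorphD => Ek.
have Nk0 : 0 < nc (p 0 k0).
  rewrite lt_def nc_ge0 andbT; apply/eqP => /ComplexField.Normc.eq0_normc/eqP.
  by rewrite (negbTE Hk0).
have Nk : 0 < nc (p 0 k) by apply: (lt_le_trans Nk0); apply: Hmax.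
have H1 : (l + b ^+ 2) * nc (p 0 k) <= `|b| * (nc (p 0 k) * K).
  have := congr1 nc Ek; rewrite !ComplexField.Normc.normcM nc_real.
  have -> : nc (0 +i* b) = `|b|.
    by rewrite /ComplexField.Normc.normc /= expr0n /= add0r sqrtr_sqr.
  rewrite ger0_norm; last by rewrite addr_ge0 ?sqr_ge0 // (le_trans _ (ltW Hl)) // addr_ge0 ?sqr_ge0.
  move=> ->; apply: ler_wpM2l => //.
  apply: (@le_trans _ _ (\sum_j nc (p 0 j * map_mx f A j k))).
    elim/big_rec2: _ => [|j x y _ Hxy]; first by rewrite ComplexField.Normc.normc0.
    by apply: (le_trans (le_normcD _ _)); rewrite lerD2l.
  apply: (@le_trans _ _ (\sum_j nc (p 0 j) * `|A j k|)).
    apply: ler_sum => j _; rewrite mxE ComplexField.Normc.normcM nc_real.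
    by apply: ler_wpM2r => //; apply: Hmax.
  apply: (@le_trans _ _ (\sum_j nc (p 0 k) * `|A j k|)).
    by apply: ler_sum => j _; apply: ler_wpM2r => //; apply: Hmax.
  rewrite -mulr_sumr; apply: ler_wpM2l; first exact: ltW.
  apply: ler_sum => j _.
  rewrite (bigD1 k) //= lerDl; apply: sumr_ge0 => i _ //.
have H2 : l + b ^+ 2 <= `|b| * K.
  rewrite -(ler_pM2r Nk); apply: (le_trans H1); by rewrite [nc _ * K]mulrC mulrA.
have t0 : 0 <= `|b| by [].
have tb : b ^+ 2 = `|b| ^+ 2 by rewrite real_normK // num_real.
rewrite tb in H2.
move: (`|b|) t0 H2 => t t0 H2.
exact (@final R K l t K0 t0 Hl H2).
Qed.
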